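(* Let $G$ be a commutative group, $H$ a subgroup, $G'=G/H$ and $\varphi:G\to G'$ the natural homomorphism. Let $U\subset G$ be a nonempty finite set, $V=\varphi(U)$, and $1<p<\infty$. Then \[ \beta_p(U)\ge\beta_p(V)\min_{x\in V}\beta_p\bigl(U\cap\varphi^{-1}(x)\bigr), \] where $\beta_p(V)$ is computed in $G'$ and the other quantities in $G$.
   Context: For a finite set $U$ in a commutative group $K$ and $1<p<\infty$, $\beta_p(U)=\inf_{A,B}\frac{|A+B+U|}{|A|^{1/p}|B|^{1-1/p}}$, the infimum over all nonempty finite $A,B\subset K$. *)

(* Defs.v *)
From HB Require Import structures.
From mathcomp Require Import all_boot all_order all_algebra.
From mathcomp Require Import finmap.
From mathcomp Require Import classical_sets boolp reals exp.
Set Implicit Arguments. Unset Strict Implicit. Unset Printing Implicit Defensive.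
Import Order.TTheory GRing.Theory Num.Theory.
Local Open Scope ring_scope.
Local Open Scope classical_set_scope.
Local Open Scope fset_scope.

Definition sumset (G : zmodType) (A B : {fset G}) : {fset G} :=
  [fset (a + b)%R | a in A, b in B].

Definition beta_ratio (R : realType) (G : zmodType) (p : R) (U A B : {fset G}) : R :=
  (#|` sumset (sumset A B) U|%:R) /
    ((#|` A|%:R `^ p^-1) * (#|` B|%:R `^ (1 - p^-1))).

Definition beta (R : realType) (G : zmodType) (p : R) (U : {fset G}) : R :=
  inf [set r : R | exists A B : {fset G},
         [/\ A != fset0, B != fset0 & r = beta_ratio p U A B]].

Definition fimage (G G' : zmodType) (phi : G -> G') (U : {fset G}) : {fset G'} :=
  [fset phi u | u in U].
Definition fibre (G G' : zmodType) (phi : G -> G') (U : {fset G}) (x : G') : {fset G} :=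
  [fset u in U | phi u == x].

(* min over x in V of beta_p(U ∩ phi^{-1}(x)); V finite nonempty, so this
   infimum of a finite nonempty set of reals is its minimum. *)
Definition min_fibre_beta (R : realType) (G G' : zmodType) (p : R)
    (phi : G -> G') (U : {fset G}) : R :=
  inf [set beta p (fibre phi U x) | x in [set x | x \in fimage phi U]].

(* Main.v *)
Require Import Defs.
From HB Require Import structures.
From mathcomp Require Import all_boot all_order all_algebra.
From mathcomp Require Import finmap.
From mathcomp Require Import classical_sets boolp reals exp.
From mathcomp Require Import ring lra zify.
Import Order.TTheory GRing.Theory Num.Theory.
Local Open Scope ring_scope.
Section Reals.
Context {R : realType}.

Lemma amgm (s x z : R) : 0 < s -> s < 1 -> 0 <= x -> 0 <= z ->
  x `^ s * z `^ (1 - s) <= s * x + (1 - s) * z.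
Proof.
move=> s0 s1 x0 z0.
have s'0 : 0 < 1 - s by lra.
have := @conjugate_powR R (x `^ s) (z `^ (1 - s)) s^-1 (1 - s)^-1
  (powR_ge0 _ _) (powR_ge0 _ _) ltac:(by rewrite invr_gt0) ltac:(by rewrite invr_gt0).
rewrite -!powRrM !mulfV ?gt_eqF // !powRr1 // !invrK => /(_ ltac:(lra)).
idtac.
by rewrite (mulrC x) (mulrC z).
Qed.

Lemma concave_powR (s l x y : R) : 0 < s -> s < 1 -> 0 <= l -> l <= 1 ->
  0 <= x -> 0 <= y ->
  l * x `^ s + (1 - l) * y `^ s <= (l * x + (1 - l) * y) `^ s.
Proof.
move=> s0 s1 l0 l1 x0 y0.
set z := l * x + (1 - l) * y.
have lx0 : 0 <= l * x by rewrite mulr_ge0.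
have ly0 : 0 <= (1 - l) * y by rewrite mulr_ge0 // subr_ge0.
have z0 : 0 <= z by rewrite /z addr_ge0.
have [zz|zpos] := eqVneq z 0.
  move/eqP: zz (zz); rewrite /z paddr_eq0 // => /andP[/eqP lx /eqP ly] zz.
  rewrite zz powR0 ?gt_eqF //.
  have -> : l * x `^ s = 0.
    move/eqP: lx; rewrite mulf_eq0 => /orP[/eqP->|/eqP->]; first by rewrite mul0r.
    by rewrite powR0 ?gt_eqF // mulr0.
  have -> : (1 - l) * y `^ s = 0.
    move/eqP: ly; rewrite mulf_eq0 => /orP[/eqP->|/eqP->]; first by rewrite mul0r.
    by rewrite powR0 ?gt_eqF // mulr0.
  by rewrite addr0.
have zgt : 0 < z by rewrite lt_neqAle eq_sym zpos z0.
have hx := amgm _ _ _ s0 s1 x0 z0.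
have hy := amgm _ _ _ s0 s1 y0 z0.
have zt : 0 < z `^ (1 - s) by apply: powR_gt0.
have key : (l * x `^ s + (1 - l) * y `^ s) * z `^ (1 - s) <= z.
  have h1 := ler_wpM2l l0 hx.
  have h2 : 0 <= 1 - l by rewrite subr_ge0.
  have h3 := ler_wpM2l h2 hy.
  have ez : z = l * x + (1 - l) * y by [].
  clearbody z.
  rewrite mulrDl -!mulrA.
  have e : z = l * (s * x + (1 - s) * z) + (1 - l) * (s * y + (1 - s) * z).
    rewrite ez; ring.
  rewrite [X in _ <= X]e; exact: lerD h1 h3.
have zz : z `^ s * z `^ (1 - s) = z.
  rewrite -powRD; last by apply/implyP => _; exact: zpos.
  by rewrite addrC subrK powRr1.
rewrite -[X in _ <= X](mulfK (lt0r_neq0 zt)) zz.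
by rewrite ler_pdivlMr.
Qed.
Lemma eq_ler' (x y : R) : x = y -> x <= y. Proof. by move->. Qed.

Lemma powR_le (r x y : R) : 0 <= r -> 0 <= x -> x <= y -> x `^ r <= y `^ r.
Proof.
move=> r0 x0 xy; apply: ge0_ler_powR => //; rewrite nnegrE //; exact: le_trans xy.
Qed.

Lemma powR_split (s t x : R) : s + t = 1 -> 0 <= x -> x `^ s * x `^ t = x.
Proof.
move=> st x0; have [->|xn0] := eqVneq x 0.
  have [s0|s0] := eqVneq s 0.
    have t1 : t = 1 by rewrite -st s0 add0r.
    by rewrite s0 t1 powRr0 powRr1 // mul1r.
  by rewrite powR0 // mul0r.
by rewrite -powRD ?st ?powRr1 //; apply/implyP.
Qed.

Lemma powR_split' (s t x : R) : s + t = 1 -> 0 <= x -> x = x `^ s * x `^ t.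
Proof. by move=> st x0; rewrite powR_split. Qed.
Arguments powR_split' {s t x}.

Lemma crit (s t X a k Y b l : R) : 0 < s -> 0 < t -> s + t = 1 ->
  0 < a -> 1 <= k -> k * a <= X -> 0 < b -> 0 <= Y -> 0 <= l ->
  k * a * Y <= l * b * X ->
  X `^ s * Y `^ t <= (X - a) `^ s * Y `^ t + (k `^ s - (k - 1) `^ s) * l `^ t * (a `^ s * b `^ t).
Proof.
move=> s0 t0 st a0 k1 kaX b0 Y0 l0 crt.
have s1 : s < 1 by lra.
have k0 : 0 < k by lra.
set c := X / k.
have Xc : X = k * c by rewrite /c mulrC divfK ?gt_eqF.
have c0 : 0 < c by rewrite /c divr_gt0 //; nra.
set u := a / c.
have ac : a = u * c by rewrite /u divfK ?gt_eqF.
have u0 : 0 <= u by rewrite /u divr_ge0 //; lra.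
have u1 : u <= 1 by rewrite /u ler_pdivrMr // mul1r; nra.
clearbody u c.
have e : X - a = u * ((k - 1) * c) + (1 - u) * (k * c) by rewrite Xc ac; ring.
have km0 : 0 <= (k - 1) * c by rewrite mulr_ge0 // ?subr_ge0 // ltW.
have kc0 : 0 <= k * c by rewrite mulr_ge0 // ltW.
have hc := concave_powR s u ((k - 1) * c) (k * c) s0 s1 u0 u1 km0 kc0.
rewrite -e -Xc in hc.
have D0 : 0 <= k `^ s - (k - 1) `^ s.
  by rewrite subr_ge0; apply: powR_le; lra.
have hX : X `^ s - (X - a) `^ s <= u * c `^ s * (k `^ s - (k - 1) `^ s).
  have : X `^ s - (X - a) `^ s <= u * (X `^ s - ((k - 1) * c) `^ s).
    rewrite -subr_ge0.
    have -> : u * (X `^ s - ((k - 1) * c) `^ s) - (X `^ s - (X - a) `^ s)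
      = (X - a) `^ s - (u * ((k - 1) * c) `^ s + (1 - u) * X `^ s) by ring.
    by rewrite subr_ge0.
  rewrite Xc !powRM; [|lra|lra|lra|lra].
  by move=> h; apply: (le_trans h); apply: eq_ler'; ring.
have key : u * c `^ s * Y `^ t <= l `^ t * (a `^ s * b `^ t).
  have ct : 0 < c `^ t by apply: powR_gt0.
  rewrite -(ler_pM2r ct).
  have -> : u * c `^ s * Y `^ t * c `^ t = a * Y `^ t.
    by rewrite ac -[in RHS](powR_split s t c st (ltW c0)); ring.
  have L : a `^ s * (a * Y) `^ t = a * Y `^ t.
    by rewrite (powRM _ (ltW a0) Y0) mulrA -(powR_split' st (ltW a0)).
  have R' : l `^ t * (a `^ s * b `^ t) * c `^ t = a `^ s * (l * b * c) `^ t.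
    rewrite (powRM _ (mulr_ge0 l0 (ltW b0)) (ltW c0)) (powRM _ l0 (ltW b0)); ring.
  rewrite -L R' ler_wpM2l ?powR_ge0 //; apply: powR_le (ltW t0) _ _.
    by rewrite mulr_ge0 // ltW.
  rewrite -(ler_pM2l k0) mulrA; apply: le_trans crt _; rewrite Xc; apply: eq_ler'; ring.
have hY : 0 <= Y `^ t by apply: powR_ge0.
have : (X `^ s - (X - a) `^ s) * Y `^ t <= u * c `^ s * (k `^ s - (k - 1) `^ s) * Y `^ t.
  exact: ler_wpM2r.
have : (k `^ s - (k - 1) `^ s) * (u * c `^ s * Y `^ t) <= (k `^ s - (k - 1) `^ s) * (l `^ t * (a `^ s * b `^ t)).
  exact: ler_wpM2l.
move=> h1 h2.
have E1 : u * c `^ s * (k `^ s - (k - 1) `^ s) * Y `^ t = (k `^ s - (k - 1) `^ s) * (u * c `^ s * Y `^ t) by ring.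
have E2 : (k `^ s - (k - 1) `^ s) * l `^ t * (a `^ s * b `^ t) = (k `^ s - (k - 1) `^ s) * (l `^ t * (a `^ s * b `^ t)) by ring.
rewrite E2; lra.
Qed.
End Reals.
Local Open Scope fset_scope.
Section Sumset.
Context {G : zmodType}.

Lemma sumsetP (A B : {fset G}) x :
  reflect (exists a b, [/\ a \in A, b \in B & x = (a + b)%R]) (x \in sumset A B).
Proof.
apply: (iffP (imfset2P _ _ _ _ _)) => [[a aA [b bB ->]]|[a [b [aA bB ->]]]].
  by exists a, b.
by exists a => //; exists b.
Qed.

Lemma mem_sumset (A B : {fset G}) a b : a \in A -> b \in B -> (a + b)%R \in sumset A B.
Proof. by move=> aA bB; apply/sumsetP; exists a, b. Qed.

Lemma sumsetS (A A' B B' : {fset G}) : A `<=` A' -> B `<=` B' -> sumset A B `<=` sumset A' B'.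
Proof.
move=> /fsubsetP hA /fsubsetP hB; apply/fsubsetP => x /sumsetP [a [b [aA bB ->]]].
by apply: mem_sumset; [apply: hA | apply: hB].
Qed.

End Sumset.

Section Comb.
Context {G G' : zmodType} (phi : G -> G').
Hypothesis phi_add : forall x y : G, (phi (x + y) = phi x + phi y)%R.

Lemma fibreE (A : {fset G}) y x : (x \in fibre phi A y) = (x \in A) && (phi x == y).
Proof. by rewrite /fibre !inE. Qed.

Lemma fimageP (A : {fset G}) y : reflect (exists2 x, x \in A & y = phi x) (y \in fimage phi A).
Proof. exact: (iffP (imfsetP _ _ _ _)). Qed.

Lemma mem_fimage (A : {fset G}) x : x \in A -> phi x \in fimage phi A.
Proof. by move=> xA; apply/fimageP; exists x. Qed.

Lemma fimageS (A B : {fset G}) : A `<=` B -> fimage phi A `<=` fimage phi B.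
Proof.
move=> /fsubsetP h; apply/fsubsetP => y /fimageP [x xA ->]; apply: mem_fimage; exact: h.
Qed.

Lemma fibre_neq0 (A : {fset G}) y : y \in fimage phi A -> fibre phi A y != fset0.
Proof.
move=> /fimageP [x xA ->]; apply/fset0Pn; exists x; by rewrite fibreE xA eqxx.
Qed.

Lemma fibre_sum (C : {fset G}) (W : {fset G'}) :
  (forall c, c \in C -> phi c \in W) ->
  #|` C| = (\sum_(w <- W) #|` fibre phi C w|)%N.
Proof.
move=> hC.
have e : forall w, #|` fibre phi C w| = (\sum_(c <- C | phi c == w) 1)%N.
  by move=> w; rewrite card_fset_sum1 [RHS]big_fset_condE.
rewrite (eq_bigr _ (fun w _ => e w)).
rewrite (exchange_big_dep xpredT) //= card_fset_sum1 big_seq [in RHS]big_seq.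
apply: eq_bigr => c cC.
rewrite big_fset_condE.
have -> : [fset i in W | phi c == i] = [fset phi c].
  apply/fsetP => w; rewrite !inE /=; apply/andP/eqP => [[_ /eqP ->]|->] //.
  by split; [apply: hC | ].
by rewrite big_seq_fset1.
Qed.

Lemma phi_sumset3 (A B U : {fset G}) c : c \in sumset (sumset A B) U ->
  phi c \in sumset (sumset (fimage phi A) (fimage phi B)) (fimage phi U).
Proof.
move=> /sumsetP [ab [u [/sumsetP [a [b [aA bB ->]]] uU ->]]].
rewrite !phi_add; apply/sumsetP; exists (phi a + phi b)%R, (phi u); split; [apply/sumsetP; exists (phi a), (phi b); split| |] => //; exact: mem_fimage.
Qed.


Variable R : realType.

Definition HU (m s t : R) (U : {fset G}) :=
  forall x, x \in fimage phi U -> forall A B : {fset G}, A != fset0 -> B != fset0 ->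
  m * (#|` A|%:R `^ s * #|` B|%:R `^ t) <= #|` sumset (sumset A B) (fibre phi U x)|%:R.

Lemma powR_le' (r x y : R) : 0 <= r -> 0 <= x -> x <= y -> x `^ r <= y `^ r.
Proof.
move=> r0 x0 xy; apply: ge0_ler_powR => //; rewrite nnegrE //; exact: le_trans xy.
Qed.

Lemma Flem (U A B C1 : {fset G}) (S1 : {fset G'}) (a b m s t : R) :
  C1 `<=` sumset (sumset A B) U -> (forall c, c \in C1 -> phi c \in S1) ->
  S1 `<=` sumset (sumset (fimage phi A) (fimage phi B)) (fimage phi U) ->
  HU m s t U ->
  0 <= m -> 0 <= a -> 0 <= b -> 0 <= s -> 0 <= t ->
  (forall y, y \in fimage phi A -> a <= #|` fibre phi A y|%:R) ->
  (forall z, z \in fimage phi B -> b <= #|` fibre phi B z|%:R) ->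
  (#|` C1|%:R + (#|` sumset (sumset (fimage phi A) (fimage phi B)) (fimage phi U)|%:R - #|` S1|%:R)
     * (m * (a `^ s * b `^ t)) <= #|` sumset (sumset A B) U|%:R)%R.
Proof.
set C := sumset (sumset A B) U; set S := sumset (sumset _ _) _.
move=> C1C C1S1 S1S hU m0 a0 b0 s0 t0 ha hb.
rewrite (@fibre_sum C S); last by move=> c cC; apply: phi_sumset3.
rewrite natr_sum (big_fsetID _ (mem S1)) /=.
have e1 : [fset x in S | x \in S1] = S1.
  apply/fsetP => w; rewrite !inE /=; apply/andP/idP => [[]//|wS1]; split => //.
  by move/fsubsetP: S1S; apply.
have e2 : [fset x in S | x \notin S1] = S `\` S1.
  by apply/fsetP => w; rewrite !inE /= andbC.
rewrite e1 e2.
have h1 : (#|` C1| <= \sum_(w <- S1) #|` fibre phi C w|)%N.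
  rewrite (@fibre_sum C1 S1) //; apply: leq_sum => w _.
  apply: fsubset_leq_card; apply/fsubsetP => c; rewrite !fibreE => /andP[cC1 ->].
  by rewrite andbT; move/fsubsetP: C1C; apply.
have h3 : (#|` S `\` S1|%:R = #|` S|%:R - #|` S1|%:R :> R)%R.
  by rewrite cardfsDS // natrB // fsubset_leq_card.
have h2 : #|` S `\` S1|%:R * (m * (a `^ s * b `^ t)) <= \sum_(w <- S `\` S1) (#|` fibre phi C w|%:R : R).
  rewrite card_fset_sum1 natr_sum mulr_suml big_seq [X in _ <= X]big_seq.
  apply: ler_sum => w; rewrite in_fsetD => /andP[_ wS]; rewrite mul1r.
  move: wS => /sumsetP [yz [x [/sumsetP [y [z [yA zB ->]]] xU ->]]].
  have hsub : sumset (sumset (fibre phi A y) (fibre phi B z)) (fibre phi U x)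
      `<=` fibre phi C (y + z + x)%R.
    apply/fsubsetP => c /sumsetP [ab [u [/sumsetP [a1 [b1 [a1A b1B ->]]] uU ->]]].
    move: a1A b1B uU; rewrite !fibreE => /andP[a1A /eqP <-] /andP[b1B /eqP <-] /andP[uU /eqP <-].
    rewrite !phi_add eqxx andbT; apply: mem_sumset => //; exact: mem_sumset.
  have hc : (#|` sumset (sumset (fibre phi A y) (fibre phi B z)) (fibre phi U x)|%:R : R)
      <= #|` fibre phi C (y + z + x)%R|%:R.
    by rewrite ler_nat; apply: fsubset_leq_card.
  have hu := hU x xU _ _ (fibre_neq0 _ _ yA) (fibre_neq0 _ _ zB).
  have hm : (m * (a `^ s * b `^ t) <= m * (#|` fibre phi A y|%:R `^ s * #|` fibre phi B z|%:R `^ t))%R.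
    apply: ler_wpM2l => //.
    apply: ler_pM; rewrite ?powR_ge0 //; apply: powR_le' => //; by [apply: ha | apply: hb].
  exact: le_trans hm (le_trans hu hc).
rewrite h3 in h2.
have h1' : (#|` C1|%:R : R) <= \sum_(w <- S1) (#|` fibre phi C w|%:R : R).
  by rewrite -natr_sum ler_nat.
lra.
Qed.

End Comb.

Section Removal.
Context {G G' : zmodType} (phi : G -> G').

Definition rem_fibre (A : {fset G}) (y0 : G') : {fset G} := [fset u in A | phi u != y0].

Lemma rem_sub A y0 : rem_fibre A y0 `<=` A.
Proof. by apply/fsubsetP => u; rewrite !inE => /andP[]. Qed.

Lemma rem_fimage A y0 : fimage phi (rem_fibre A y0) = fimage phi A `\ y0.
Proof.
apply/fsetP => y; rewrite in_fsetD1; apply/fimageP/andP.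
  move=> [u]; rewrite !inE => /andP[uA uy0] ->; split => //; exact: mem_fimage.
move=> [yy0 /fimageP [u uA yu]]; exists u => //; rewrite !inE uA /= -yu //.
Qed.

Lemma rem_fibreE A y0 y : y != y0 -> fibre phi (rem_fibre A y0) y = fibre phi A y.
Proof.
move=> yy0; apply/fsetP => u; rewrite !fibreE !inE.
by case: (eqVneq (phi u) y) => [->|]; rewrite ?yy0 ?andbT ?andbF.
Qed.

Lemma rem_card A y0 : #|` A| = (#|` fibre phi A y0| + #|` rem_fibre A y0|)%N.
Proof.
rewrite !card_fset_sum1 (bigID (fun u => phi u == y0)) /=.
by rewrite (big_fset_condE _ _ (fun u => phi u == y0)) (big_fset_condE _ _ (fun u => phi u != y0)).
Qed.

Lemma fibre_card_gt0 A y : y \in fimage phi A -> (0 < #|` fibre phi A y|)%N.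
Proof. by move=> /fibre_neq0; rewrite cardfs_gt0. Qed.

Lemma fibre_min A : A != fset0 ->
  exists2 y0, y0 \in fimage phi A & forall y, y \in fimage phi A -> (#|` fibre phi A y0| <= #|` fibre phi A y|)%N.
Proof.
move=> /fset0Pn [u uA].
have ex : exists n, [exists y : fimage phi A, #|` fibre phi A (val y)| == n].
  exists #|` fibre phi A (phi u)|; apply/existsP.
  by exists [` mem_fimage phi _ _ uA]; rewrite eqxx.
case: (ex_minnP ex) => n /existsP [[y0 y0Y] /= /eqP hy0] hmin.
exists y0 => // y yY; rewrite hy0; apply: hmin; apply/existsP.
by exists [` yY]; rewrite eqxx.
Qed.

End Removal.

Section Helpers.
Context {G G' : zmodType} (phi : G -> G').

Lemma fibre_avg (A : {fset G}) (a : nat) :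
  (forall y, y \in fimage phi A -> a <= #|` fibre phi A y|)%N ->
  (#|` fimage phi A| * a <= #|` A|)%N.
Proof.
move=> h; rewrite (@fibre_sum _ _ phi A (fimage phi A)); last by move=> c cA; apply: mem_fimage.
rewrite card_fset_sum1 big_distrl /= big_seq [X in (_ <= X)%N]big_seq.
by apply: leq_sum => y yY; rewrite mul1n; apply: h.
Qed.

Lemma fibre_single (A : {fset G}) y0 : #|` fimage phi A| = 1%N -> y0 \in fimage phi A ->
  #|` fibre phi A y0| = #|` A|.
Proof.
move=> /eqP /cardfs1P [x hx] y0Y.
rewrite (@fibre_sum _ _ phi A (fimage phi A)); last by move=> c cA; apply: mem_fimage.
move: y0Y; rewrite hx inE => /eqP ->; by rewrite big_seq_fset1.
Qed.

Lemma fimage_neq0 (A : {fset G}) : fimage phi A != fset0 -> A != fset0.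
Proof. by move=> /fset0Pn [y /fimageP [u uA _]]; apply/fset0Pn; exists u. Qed.

End Helpers.

Section Main.
Local Close Scope fset_scope.
Context {G G' : zmodType} (phi : G -> G').
Hypothesis phi_add : forall x y : G, (phi (x + y) = phi x + phi y)%R.
Context {R : realType} (s t m bt : R) (U : {fset G}).
Hypotheses (s0 : 0 < s) (t0 : 0 < t) (st : s + t = 1) (m0 : 0 <= m) (bt0 : 0 <= bt)
  (hU : HU phi R m s t U)
  (hV : forall Y Z : {fset G'}, Y != fset0 -> Z != fset0 ->
     bt * (#|` Y|%:R `^ s * #|` Z|%:R `^ t) <= #|` sumset (sumset Y Z) (fimage phi U)|%:R).

Lemma claim n : forall A B : {fset G}, (#|` A| + #|` B| <= n)%N -> A != fset0 -> B != fset0 ->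
  forall al ga : R, 0 <= al -> 0 <= ga ->
  (forall y, y \in fimage phi A -> al <= #|` fibre phi A y|%:R) ->
  (forall z, z \in fimage phi B -> ga <= #|` fibre phi B z|%:R) ->
  m * (bt * (#|` A|%:R `^ s * #|` B|%:R `^ t)
    + (#|` sumset (sumset (fimage phi A) (fimage phi B)) (fimage phi U)|%:R
       - bt * (#|` fimage phi A|%:R `^ s * #|` fimage phi B|%:R `^ t)) * (al `^ s * ga `^ t))
  <= #|` sumset (sumset A B) U|%:R.
Proof.
elim: n => [|n IH] A B hn An0 Bn0 al ga al0 ga0 hal hga.
  move: An0; rewrite -cardfs_gt0; move: hn; rewrite leqn0 addn_eq0 => /andP[/eqP -> _].
  by [].
have [y0 y0Y ymin] := fibre_min phi _ An0.
have [z0 z0Z zmin] := fibre_min phi _ Bn0.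
have Yn0 : fimage phi A != fset0 by apply/fset0Pn; exists y0.
have Zn0 : fimage phi B != fset0 by apply/fset0Pn; exists z0.
have hS := hV _ _ Yn0 Zn0.
set S := sumset (sumset (fimage phi A) (fimage phi B)) (fimage phi U) in hS *.
set C := sumset (sumset A B) U.
have a0 := fibre_card_gt0 phi _ _ y0Y.
have b0 := fibre_card_gt0 phi _ _ z0Z.
have k0 : (0 < #|` fimage phi A|)%N by rewrite cardfs_gt0.
have l0 : (0 < #|` fimage phi B|)%N by rewrite cardfs_gt0.
have hka := fibre_avg phi _ _ ymin.
have hlb := fibre_avg phi _ _ zmin.
set a := #|` fibre phi A y0| in a0 ymin hka *.
set b := #|` fibre phi B z0| in b0 zmin hlb *.
set k := #|` fimage phi A| in k0 hka hS *.
set l := #|` fimage phi B| in l0 hlb hS *.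
set X := #|` A| in hn hka *.
set Yb := #|` B| in hn hlb *.
have ymin' : forall y, y \in fimage phi A -> (a%:R : R) <= #|` fibre phi A y|%:R.
  by move=> y yY; rewrite ler_nat; apply: ymin.
have zmin' : forall z, z \in fimage phi B -> (b%:R : R) <= #|` fibre phi B z|%:R.
  by move=> z zZ; rewrite ler_nat; apply: zmin.
have P0 : 0 <= (a%:R : R) `^ s * (b%:R : R) `^ t by rewrite mulr_ge0 ?powR_ge0.
suff main : m * (bt * (X%:R `^ s * Yb%:R `^ t) + (#|` S|%:R - bt * (k%:R `^ s * l%:R `^ t))
     * ((a%:R : R) `^ s * (b%:R : R) `^ t)) <= #|` C|%:R.
  apply: le_trans main; apply: ler_wpM2l => //; apply: lerD => //.
  apply: ler_wpM2l; first by rewrite subr_ge0.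
  apply: ler_pM; rewrite ?powR_ge0 //; apply: powR_le'. exact: ltW. exact: al0. exact: (hal y0 y0Y). exact: ltW. exact: ga0. exact: (hga z0 z0Z).
have Fgen := Flem phi phi_add.
case: (boolP ((k == 1%N) && (l == 1%N))) => [/andP[/eqP k1 /eqP l1]|nbase].
  have Xa : X = a by rewrite /X /a fibre_single.
  have Yb_b : Yb = b by rewrite /Yb /b fibre_single.
  have hc0 : forall c, c \in (fset0 : {fset G}) -> phi c \in (fset0 : {fset G'}) by move=> c; rewrite inE.
  have F := Fgen R U A B fset0 fset0 a%:R b%:R m s t (fsub0set _) hc0
    (fsub0set _) hU m0 (ler0n _ _) (ler0n _ _) (ltW s0) (ltW t0) ymin' zmin'.
  rewrite cardfs0 in F.
  rewrite Xa Yb_b k1 l1 !powR1 /=.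
  have e : m * (bt * ((a%:R : R) `^ s * (b%:R : R) `^ t) + (#|` S|%:R - bt * (1 * 1)) * ((a%:R : R) `^ s * (b%:R : R) `^ t))
     = 0%:R + (#|` S|%:R - 0%:R) * (m * ((a%:R : R) `^ s * (b%:R : R) `^ t)) by ring.
  by rewrite e.
have hcase : ((1 < k) && (k * a * Yb <= l * b * X))%N \/ ((1 < l) && (l * b * X <= k * a * Yb))%N.
  case: (eqVneq k 1%N) => [k1|k1].
    have l1 : l != 1%N by move: nbase; rewrite k1 eqxx.
    have Xa : X = a by rewrite /X /a fibre_single.
    right; apply/andP; split; first by rewrite ltn_neqAle eq_sym l1 l0.
    by rewrite k1 Xa mul1n [X in (X <= _)%N]mulnC leq_mul2l hlb orbT.
  case: (eqVneq l 1%N) => [l1|l1].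
    have Yb_b : Yb = b by rewrite /Yb /b fibre_single.
    left; apply/andP; split; first by rewrite ltn_neqAle eq_sym k1 k0.
    by rewrite l1 Yb_b mul1n [X in (X <= _)%N]mulnC leq_mul2l hka orbT.
  have k2 : (1 < k)%N by rewrite ltn_neqAle eq_sym k1 k0.
  have l2 : (1 < l)%N by rewrite ltn_neqAle eq_sym l1 l0.
  case: (leqP (k * a * Yb) (l * b * X)) => h; [left|right]; rewrite ?k2 ?l2 ?h //=.
  exact: ltnW.
have hmb : 0 <= m * bt by rewrite mulr_ge0.
case: hcase => /andP[k1 crt].
  set A' := rem_fibre phi A y0.
  have hX : X = (a + #|` A'|)%N := rem_card phi A y0.
  have hY' : fimage phi A' = (fimage phi A `\ y0)%fset := rem_fimage phi A y0.
  have hk' : #|` fimage phi A'| = k.-1.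
    by rewrite hY' /k (cardfsD1 y0 (fimage phi A)) y0Y.
  have A'n0 : A' != fset0.
    by apply: (fimage_neq0 phi); rewrite -cardfs_gt0 hk' -ltnS prednK.
  have hmin' : forall y, y \in fimage phi A' -> (a%:R : R) <= #|` fibre phi A' y|%:R.
    move=> y; rewrite hY' in_fsetD1 => /andP[yy0 yY]; rewrite rem_fibreE //; exact: ymin' y yY.
  have hsz : (#|` A'| + #|` B| <= n)%N.
    rewrite -ltnS; apply: leq_trans hn; rewrite hX -addnA -[X in (X < _)%N]add0n ltn_add2r //.
  have IH' := IH A' B hsz A'n0 Bn0 a%:R b%:R (ler0n _ _) (ler0n _ _) hmin' zmin'.
  have sub1 : (sumset (sumset A' B) U `<=` C)%fset.
    by apply: sumsetS; [apply: sumsetS; [apply: rem_sub|apply: fsubset_refl]|apply: fsubset_refl].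
  have sub2 : (sumset (sumset (fimage phi A') (fimage phi B)) (fimage phi U) `<=` S)%fset.
    apply: sumsetS; [apply: sumsetS; [apply: fimageS; apply: rem_sub|apply: fsubset_refl]|apply: fsubset_refl].
  have hph : forall c, c \in sumset (sumset A' B) U ->
      phi c \in sumset (sumset (fimage phi A') (fimage phi B)) (fimage phi U).
    by move=> c; apply: phi_sumset3.
  have F := Fgen R U A B _ _ a%:R b%:R m s t sub1 hph sub2 hU m0 (ler0n _ _) (ler0n _ _) (ltW s0) (ltW t0) ymin' zmin'.
  have cr := crit s t X%:R a%:R k%:R Yb%:R b%:R l%:R s0 t0 st
    ltac:(by rewrite ltr0n) ltac:(by rewrite ler1n ltnW) ltac:(by rewrite -natrM ler_nat)
    ltac:(by rewrite ltr0n) (ler0n _ _) (ler0n _ _) ltac:(by rewrite -!natrM ler_nat).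
  rewrite hk' in IH'.
  have eA : (#|` A'|%:R : R) = X%:R - a%:R by rewrite hX natrD; ring.
  have eK : ((k.-1)%:R : R) = k%:R - 1 by rewrite -(prednK k0) /= -addn1 natrD addrK.
  rewrite eA eK in IH'.
  have crm := ler_wpM2l hmb cr.
  move: IH' F hS crm; rewrite -/S -/C.
  set P := (a%:R : R) `^ s * (b%:R : R) `^ t.
  set S' := sumset (sumset (fimage phi A') (fimage phi B)) (fimage phi U).
  set C' := sumset (sumset A' B) U.
  move=> IH' F hS crm.
  set D := (k%:R : R) `^ s - (k%:R - 1) `^ s.
  set Q := (X%:R : R) `^ s * Yb%:R `^ t.
  set Q' := ((X%:R : R) - a%:R) `^ s * Yb%:R `^ t.
  have H : m * (bt * Q + (#|` S|%:R - bt * (k%:R `^ s * l%:R `^ t)) * P)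
    = (m * bt * Q - m * bt * (Q' + D * l%:R `^ t * P))
      + (m * (bt * Q' + (#|` S'|%:R - bt * ((k%:R - 1) `^ s * l%:R `^ t)) * P)
         + (#|` S|%:R - #|` S'|%:R) * (m * P)).
    rewrite /D /Q /Q'; ring.
  rewrite H; apply: le_trans F.
  rewrite -[X in _ <= X]add0r; apply: lerD; first by rewrite subr_le0.
  exact: lerD IH' (lexx _).
set B' := rem_fibre phi B z0.
have hYb : Yb = (b + #|` B'|)%N := rem_card phi B z0.
have hZ' : fimage phi B' = (fimage phi B `\ z0)%fset := rem_fimage phi B z0.
have hl' : #|` fimage phi B'| = l.-1.
  by rewrite hZ' /l (cardfsD1 z0 (fimage phi B)) z0Z.
have B'n0 : B' != fset0.
  by apply: (fimage_neq0 phi); rewrite -cardfs_gt0 hl' -ltnS prednK.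
have hmin' : forall z, z \in fimage phi B' -> (b%:R : R) <= #|` fibre phi B' z|%:R.
  move=> z; rewrite hZ' in_fsetD1 => /andP[zz0 zZ]; rewrite rem_fibreE //; exact: zmin' z zZ.
have hsz : (#|` A| + #|` B'| <= n)%N.
  rewrite -ltnS; apply: leq_trans hn; rewrite hYb addnCA -[X in (X < _)%N]add0n ltn_add2r //.
have IH' := IH A B' hsz An0 B'n0 a%:R b%:R (ler0n _ _) (ler0n _ _) ymin' hmin'.
have sub1 : (sumset (sumset A B') U `<=` C)%fset.
  by apply: sumsetS; [apply: sumsetS; [apply: fsubset_refl|apply: rem_sub]|apply: fsubset_refl].
have sub2 : (sumset (sumset (fimage phi A) (fimage phi B')) (fimage phi U) `<=` S)%fset.
  apply: sumsetS; [apply: sumsetS; [apply: fsubset_refl|apply: fimageS; apply: rem_sub]|apply: fsubset_refl].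
have hph : forall c, c \in sumset (sumset A B') U ->
    phi c \in sumset (sumset (fimage phi A) (fimage phi B')) (fimage phi U).
  by move=> c; apply: phi_sumset3.
have F := Fgen R U A B _ _ a%:R b%:R m s t sub1 hph sub2 hU m0 (ler0n _ _) (ler0n _ _) (ltW s0) (ltW t0) ymin' zmin'.
have ts : t + s = 1 by rewrite addrC.
have cr := crit t s Yb%:R b%:R l%:R X%:R a%:R k%:R t0 s0 ts
  ltac:(by rewrite ltr0n) ltac:(by rewrite ler1n ltnW) ltac:(by rewrite -natrM ler_nat)
  ltac:(by rewrite ltr0n) (ler0n _ _) (ler0n _ _) ltac:(by rewrite -!natrM ler_nat).
rewrite hl' in IH'.
have eB : (#|` B'|%:R : R) = Yb%:R - b%:R by rewrite hYb natrD; ring.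
have eL : ((l.-1)%:R : R) = l%:R - 1 by rewrite -(prednK l0) /= -addn1 natrD addrK.
rewrite eB eL in IH'.
have crm := ler_wpM2l hmb cr.
move: IH' F hS crm; rewrite -/S -/C.
set P := (a%:R : R) `^ s * (b%:R : R) `^ t.
set S' := sumset (sumset (fimage phi A) (fimage phi B')) (fimage phi U).
set C' := sumset (sumset A B') U.
move=> IH' F hS crm.
set D := (l%:R : R) `^ t - (l%:R - 1) `^ t.
have H : m * (bt * ((X%:R : R) `^ s * Yb%:R `^ t) + (#|` S|%:R - bt * (k%:R `^ s * l%:R `^ t)) * P)
  = (m * bt * ((Yb%:R : R) `^ t * X%:R `^ s)
     - m * bt * ((Yb%:R - b%:R) `^ t * X%:R `^ s + D * k%:R `^ s * ((b%:R : R) `^ t * (a%:R : R) `^ s)))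
    + (m * (bt * ((X%:R : R) `^ s * (Yb%:R - b%:R) `^ t)
        + (#|` S'|%:R - bt * (k%:R `^ s * (l%:R - 1) `^ t)) * P)
       + (#|` S|%:R - #|` S'|%:R) * (m * P)).
  rewrite /D /P; ring.
rewrite H; apply: le_trans F.
rewrite -[X in _ <= X]add0r; apply: lerD; first by rewrite subr_le0.
exact: lerD IH' (lexx _).
Qed.
End Main.

Section Final.
Context {G : zmodType} {R : realType}.

Definition beta_set (p : R) (U : {fset G}) : set R :=
  [set r : R | exists A B : {fset G}, [/\ A != fset0, B != fset0 & r = beta_ratio p U A B]].

Lemma ratio_ge0 (p : R) (U A B : {fset G}) : (0 <= beta_ratio p U A B)%R.
Proof. by rewrite /beta_ratio divr_ge0 // mulr_ge0 // powR_ge0. Qed.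

Lemma beta_set_lb (p : R) (U : {fset G}) : has_lbound (beta_set p U).
Proof. by exists 0%R => r [A [B [_ _ ->]]]; apply: ratio_ge0. Qed.

Lemma beta_set_ne (p : R) (U : {fset G}) : (beta_set p U !=set0)%classic.
Proof.
exists (beta_ratio p U [fset 0%R] [fset 0%R]); exists [fset 0%R], [fset 0%R].
by split => //; apply/fset0Pn; exists 0%R; rewrite inE.
Qed.

Lemma beta_ge0 (p : R) (U : {fset G}) : (0 <= beta p U)%R.
Proof.
apply: lb_le_inf; first exact: beta_set_ne.
by move=> r [A [B [_ _ ->]]]; apply: ratio_ge0.
Qed.

Lemma beta_mul_le (p : R) (U A B : {fset G}) : (1 < p)%R -> A != fset0 -> B != fset0 ->
  (beta p U * (#|` A|%:R `^ p^-1 * #|` B|%:R `^ (1 - p^-1)) <= #|` sumset (sumset A B) U|%:R)%R.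
Proof.
move=> p1 An0 Bn0.
have den : (0 < #|` A|%:R `^ p^-1 * #|` B|%:R `^ (1 - p^-1) :> R)%R.
  by rewrite mulr_gt0 // powR_gt0 // ltr0n cardfs_gt0.
rewrite -ler_pdivlMr //.
have := ge_inf (beta_set_lb p U); apply.
by exists A, B.
Qed.

End Final.

Local Open Scope fset_scope.

Theorem mainTheorem8 (R : realType) (G G' : zmodType) (phi : G -> G')
  (phi_add : forall x y : G, (phi (x + y) = phi x + phi y)%R)
  (phi_surj : forall y : G', exists x : G, phi x = y)
  (U : {fset G}) (hU : U != fset0) (p : R) (hp : 1 < p) :
  beta p U >= beta p (fimage phi U) * min_fibre_beta p phi U.
Proof.
have p0 : (0 < p)%R by apply: lt_trans hp.
have s0 : (0 < p^-1)%R by rewrite invr_gt0.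
have t0 : (0 < 1 - p^-1)%R by rewrite subr_gt0 invf_lt1.
have st : (p^-1 + (1 - p^-1) = 1)%R by rewrite addrC subrK.
set bt := beta p (fimage phi U).
set m := min_fibre_beta p phi U.
have bt0 : (0 <= bt)%R by apply: beta_ge0.
set M := [set beta p (fibre phi U x) | x in [set x | x \in fimage phi U]]%classic.
have Mlb : has_lbound M.
  by exists 0%R => r [x _ <-]; apply: beta_ge0.
have [u uU] := fset0Pn _ hU.
have Mne : (M !=set0)%classic.
  by exists (beta p (fibre phi U (phi u))); exists (phi u) => //; apply: mem_fimage.
have m0 : (0 <= m)%R.
  by apply: lb_le_inf => // r [x _ <-]; apply: beta_ge0.
have hUU : HU phi R m p^-1 (1 - p^-1) U.
  move=> x xV A B An0 Bn0.
  have mle : (m <= beta p (fibre phi U x))%R.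
    by have := ge_inf Mlb; apply; exists x.
  apply: le_trans (beta_mul_le _ (fibre phi U x) _ _ hp An0 Bn0).
  by apply: ler_wpM2r => //; rewrite mulr_ge0 // powR_ge0.
have hV : forall Y Z : {fset G'}, Y != fset0 -> Z != fset0 ->
    (bt * (#|` Y|%:R `^ p^-1 * #|` Z|%:R `^ (1 - p^-1)) <= #|` sumset (sumset Y Z) (fimage phi U)|%:R)%R.
  by move=> Y Z Yn0 Zn0; apply: beta_mul_le.
apply: lb_le_inf; first exact: beta_set_ne.
move=> r [A [B [An0 Bn0 ->]]].
have den : (0 < #|` A|%:R `^ p^-1 * #|` B|%:R `^ (1 - p^-1) :> R)%R.
  by rewrite mulr_gt0 // powR_gt0 // ltr0n cardfs_gt0.
rewrite /beta_ratio ler_pdivlMr //.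
have := @claim _ _ phi phi_add R _ _ _ _ U s0 t0 st m0 bt0 hUU hV _ A B (leqnn _) An0 Bn0 0%R 0%R (lexx 0%R) (lexx 0%R).
rewrite powR0 ?gt_eqF // mul0r mulr0 addr0.
have h1 : forall y, y \in fimage phi A -> (0 <= #|` fibre phi A y|%:R :> R)%R by move=> *; apply: ler0n.
have h2 : forall y, y \in fimage phi B -> (0 <= #|` fibre phi B y|%:R :> R)%R by move=> *; apply: ler0n.
move=> /(_ h1 h2) H.
by rewrite [(bt * m)%R]mulrC -mulrA.
Qed.
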